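(* Let $\mathbb{K}$ be a field of characteristic not $2$ or $3$ and let $\mathbb{A}$ be a commutative algebra over $\mathbb{K}$. Then $\mathbb{A}$ satisfies $(xy)^2=x^2y^2$ for all $x,y\in\mathbb{A}$ if and only if it satisfies $(xy)(zw)=(xz)(yw)$ for all $x,y,z,w\in\mathbb{A}$.
   Context: The algebra is possibly nonassociative; $x^2=xx$. *)

(* Defs.v *)
From mathcomp Require Import all_boot all_order all_algebra.
Set Implicit Arguments. Unset Strict Implicit. Unset Printing Implicit Defensive.
Import GRing.Theory.
Local Open Scope ring_scope.

Definition bilinear_mul (K : fieldType) (A : lmodType K) (mul : A -> A -> A) : Prop :=
  (forall (a : K) (x y z : A), mul (a *: x + y) z = a *: mul x z + mul y z) /\
  (forall (a : K) (x y z : A), mul x (a *: y + z) = a *: mul x y + mul x z).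

Definition commutative_mul (A : Type) (mul : A -> A -> A) : Prop :=
  forall x y : A, mul x y = mul y x.

(* Main.v *)
Require Import Defs.
From mathcomp Require Import all_boot all_order all_algebra.
Local Open Scope ring_scope.
Import GRing.Theory.

Lemma natcancel (K : fieldType) (A : lmodType K) (n : nat) (u v : A) :
  (n%:R : K) != 0 -> u *+ n = v *+ n -> u = v.
Proof.
move=> hn e.
rewrite -[u]scale1r -[v]scale1r -(mulVf hn) -!scalerA !scaler_nat e //.
Qed.

Theorem proposition3p1 (K : fieldType) (A : lmodType K) (mul : A -> A -> A)
  (hchar2 : (2%:R : K) != 0) (hchar3 : (3%:R : K) != 0)
  (hbil : bilinear_mul mul) (hcomm : commutative_mul mul) :
  (forall x y : A, mul (mul x y) (mul x y) = mul (mul x x) (mul y y)) <->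
  (forall x y z w : A, mul (mul x y) (mul z w) = mul (mul x z) (mul y w)).
Proof.
have addL : forall x y z, mul (x + y) z = mul x z + mul y z.
  by move=> x y z; rewrite -[x]scale1r hbil.1 !scale1r.
have addR : forall x y z, mul z (x + y) = mul z x + mul z y.
  by move=> x y z; rewrite -[x]scale1r hbil.2 !scale1r.
split; last by move=> H x y; rewrite H.
move=> H0.
have s1 : forall x z y, mul (mul x y) (mul z y) = mul (mul x z) (mul y y).
  move=> x z y; have := H0 (x + z) y.
  rewrite !addL !addR !addL H0 (H0 z y).
  rewrite [mul (mul z y) (mul x y)]hcomm [mul z x]hcomm.
  rewrite -!addrA => /addrI; rewrite !addrA => /addIr => e.
  by apply: (@natcancel K A 2 _ _ hchar2); rewrite mulr2n e.
have s2 : forall x y z w, mul (mul x w) (mul z y) + mul (mul x y) (mul z w)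
    = mul (mul x z) (mul y w) *+ 2.
  move=> x y z w; have := s1 x z (y + w).
  rewrite !addR !addL !addR (s1 x z y) (s1 x z w) [mul w y]hcomm.
  rewrite -!addrA => /addrI; rewrite !addrA => /addIr.
  by rewrite mulr2n.
move=> x y z w.
have h1 := s2 x y z w.
have h2 := s2 x z y w.
rewrite [mul z y]hcomm in h1.
apply: (@natcancel K A 3 _ _ hchar3).
rewrite mulrS -h2 addrA (addrC _ (mul (mul x w) _)) h1 -mulrSr //.
Qed.
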